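(* For every integer $d\ge2$, the infinite $d$-regular tree rooted at a vertex $o$ is Hamiltonian: it admits an invariant line ensemble $L$ with $\mathbb P(o\in L)=1$.
   Context: A line ensemble of $G=(V,E)$ is a symmetric $L:V^2\to\{0,1\}$ with $L(u,u)=0$, $L(u,v)=0$ unless $\{u,v\}\in E$, and $\sum_uL(u,v)\in\{0,2\}$ for all $v$; $v\in L$ means $\sum_uL(u,v)=2$. For a unimodular random rooted graph $(G,o)$, an invariant line ensemble is a random line ensemble $L$, defined on an enlarged probability space, such that the weighted rooted graph $(G,L,o)$ is unimodular, i.e. $\mathbb E\sum_vf(G,L,o,v)=\mathbb E\sum_vf(G,L,v,o)$ for all nonnegative measurable $f$ of isomorphism classes of doubly rooted weighted graphs. *)

(* Defs.v *)
From HB Require Import structures.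
From mathcomp Require Import all_boot all_order all_algebra.
From mathcomp Require Import all_classical all_reals all_analysis.
From mathcomp Require Import measurable_realfun.

Set Implicit Arguments.
Unset Strict Implicit.
Unset Printing Implicit Defensive.

Import Order.TTheory GRing.Theory Num.Theory.
Local Open Scope classical_set_scope.
Local Open Scope ring_scope.

(* The infinite d-regular tree, realised as the Cayley graph of the free
   product of d copies of Z/2Z: vertices are reduced words over the
   alphabet 'I_d (no two consecutive letters equal); u ~ v iff v = u.a
   for some generator a (right multiplication: append a, or cancel a
   trailing a).  For d >= 2 this is the d-regular tree. *)

Definition reduced (d : nat) (s : seq 'I_d) : bool :=
  sorted (fun a b : 'I_d => a != b) s.

Definition tree_vertex (d : nat) := {s : seq 'I_d | reduced s}.

Definition stepw (d : nat) (w : seq 'I_d) (a : 'I_d) : seq 'I_d :=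
  if (w != [::]) && (last a w == a) then take (size w).-1 w else rcons w a.

Definition tree_adj (d : nat) (u v : tree_vertex d) : bool :=
  [exists a : 'I_d, val v == stepw (val u) a].

Definition tree_root (d : nat) : tree_vertex d :=
  exist (fun s : seq 'I_d => reduced s) [::] isT.

(* Line ensembles of a graph (V, adj), L : V^2 -> {0,1} encoded as bool.
   sum_u L(u,v) in {0,2}: either no u, or exactly two distinct u. *)

Definition vdeg0 (V : Type) (L : V -> V -> bool) (v : V) : Prop :=
  forall u, ~~ L u v.

Definition vdeg2 (V : Type) (L : V -> V -> bool) (v : V) : Prop :=
  exists u1 u2, [/\ u1 <> u2, L u1 v, L u2 v &
                 forall u, L u v -> u = u1 \/ u = u2].

Definition in_line (V : Type) (L : V -> V -> bool) (v : V) : Prop := vdeg2 L v.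

Definition line_ensemble (V : Type) (adj : V -> V -> bool)
  (L : V -> V -> bool) : Prop :=
  [/\ forall u v, L u v = L v u,
      forall u, L u u = false,
      forall u v, L u v -> adj u v &
      forall v, vdeg0 L v \/ vdeg2 L v].

Definition graph_aut (V : Type) (adj : V -> V -> bool) (phi : V -> V) : Prop :=
  bijective phi /\ forall u v, adj (phi u) (phi v) = adj u v.

(* cylinder sigma-algebra on weight functions V -> V -> bool
   (the product sigma-algebra, i.e. the one of the local topology once the
   underlying graph is fixed) *)
Definition cylinders (V : Type) : set (set (V -> V -> bool)) :=
  [set A | exists x y, A = [set l : V -> V -> bool | l x y = true]].

(* Nonnegative measurable functions of isomorphism classes of doubly rooted
   weighted graphs (G, L, u, v), restricted to G = the fixed graph:
   functions f L u v, measurable in L for the cylinder sigma-algebra and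
   invariant under graph automorphisms. *)
Definition iso_invariant_measurable (R : realType) (V : Type)
  (adj : V -> V -> bool) (f : (V -> V -> bool) -> V -> V -> \bar R) : Prop :=
  [/\ forall l u v, (0 <= f l u v)%E,
      forall u v (B : set (\bar R)), measurable (B : set (\bar R)) ->
        <<s @cylinders V >> ((fun l => f l u v) @^-1` B) &
      forall phi, graph_aut adj phi ->
        forall l u v, f (fun x y => l (phi x) (phi y)) u v = f l (phi u) (phi v)].

(* An invariant line ensemble of the (deterministic) rooted graph (V,adj,o)
   on a probability space P: L is a random line ensemble (measurable, a line
   ensemble for every outcome) and (G, L, o) is unimodular (mass transport
   principle). *)
Definition invariant_line_ensemble (R : realType) (V : choiceType)
  (adj : V -> V -> bool) (o : V)
  (dT : measure_display) (T : measurableType dT) (P : probability T R)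
  (L : T -> V -> V -> bool) : Prop :=
  [/\ forall w, line_ensemble adj (L w),
      forall x y, measurable [set w | L w x y] &
      forall f, iso_invariant_measurable adj f ->
        (\int[P]_w (\esum_(v in [set: V]) f (L w) o v))%E =
        (\int[P]_w (\esum_(v in [set: V]) f (L w) v o))%E].

(* Main.v *)
Require Import Defs.
From HB Require Import structures.
From mathcomp Require Import all_boot all_order all_algebra.
From mathcomp Require Import all_classical all_reals all_analysis.
From mathcomp Require Import measurable_realfun.
From mathcomp Require Import zify.
Set Implicit Arguments.
Unset Strict Implicit.
Section S.
Variable d : nat.
Implicit Types (x y w g h : seq 'I_d) (a b : 'I_d).

Lemma take_rcons1 y b : take (size (rcons y b)).-1 (rcons y b) = y.
Proof. by rewrite size_rcons /= -cats1 take_size_cat. Qed.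

Lemma reduced_rcons y b : reduced (rcons y b) = reduced y && ((y == [::]) || (last b y != b)).
Proof.
case: y => [|h t] //=; rewrite /reduced /= rcons_path.
by [].
Qed.

Lemma stepw_rcons y b a : stepw (rcons y b) a = if b == a then y else rcons (rcons y b) a.
Proof.
rewrite /stepw last_rcons; case: (b == a); last by rewrite andbF.
by rewrite andbT; case: y => [|? ?]; rewrite take_rcons1.
Qed.

Lemma stepw_nil a : stepw [::] a = [:: a].
Proof. by []. Qed.

Lemma stepw_reduced x a : reduced x -> reduced (stepw x a).
Proof.
case/lastP: x => [|y b] //; rewrite stepw_rcons => H.
case: (b =P a) => [_|/eqP nba]; first by move: H; rewrite reduced_rcons => /andP[].
rewrite reduced_rcons H /= last_rcons.
by rewrite nba orbT.
Qed.

Lemma stepwK x a : reduced x -> stepw (stepw x a) a = x.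
Proof.
case/lastP: x => [|y b] //=.
  by rewrite /stepw /= eqxx.
rewrite reduced_rcons => /andP[_ Hy]; rewrite stepw_rcons.
case: (b =P a) => [eba|_]; last by rewrite stepw_rcons eqxx.
subst b; case/lastP: y Hy => [|z c] //; rewrite last_rcons stepw_rcons.
case: (c =P a) => [->|//]; rewrite /= orbF; by case: z.
Qed.

Lemma stepw_neq x a : stepw x a <> x.
Proof.
case/lastP: x => [|y b] //; rewrite stepw_rcons.
by case: (b =P a) => _ /(congr1 size); rewrite !size_rcons; lia.
Qed.

Lemma stepw_inj x a b : stepw x a = stepw x b -> a = b.
Proof.
case/lastP: x => [|y c]; first by rewrite !stepw_nil => -[].
rewrite !stepw_rcons.
case: (c =P a) => [<-|_]; case: (c =P b) => [<-|_] // E.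
- by move/(congr1 size): E; rewrite !size_rcons; lia.
- by move/(congr1 size): E; rewrite !size_rcons; lia.
- by move/rcons_inj: E => [].
Qed.

Definition mulw g w := foldl (@stepw d) g w.

Lemma mulw_reduced g w : reduced g -> reduced (mulw g w).
Proof. elim: w g => [|a w IH] g //= Hg; apply: IH; exact: stepw_reduced. Qed.

Lemma mulw_step h w a : reduced h -> mulw h (stepw w a) = stepw (mulw h w) a.
Proof.
move=> Hh; case/lastP: w => [|y b]; first by [].
rewrite stepw_rcons /mulw foldl_rcons.
case: (b =P a) => [->|_]; last by rewrite !foldl_rcons.
by rewrite stepwK //; apply: mulw_reduced.
Qed.

Lemma mulw_comp h g w : reduced h -> mulw h (mulw g w) = mulw (mulw h g) w.
Proof.
move=> Hh; elim: w g => [|a w IH] g //=.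
by rewrite /mulw /= -/(mulw _ _) IH -/(mulw _ _) mulw_step.
Qed.

Lemma mulw_rev g : reduced g -> mulw (rev g) g = [::].
Proof.
elim: g => [|a g IH] //= Hg.
rewrite /mulw /= rev_cons -/(mulw _ _).
have -> : stepw (rcons (rev g) a) a = rev g by rewrite stepw_rcons eqxx.
by apply: IH; move: Hg; rewrite /reduced /=; exact: path_sorted.
Qed.

Lemma mulw_cat x w : reduced (x ++ w) -> mulw x w = x ++ w.
Proof.
elim: w x => [|a w IH] x; first by rewrite cats0.
move=> H; rewrite /mulw /= -/(mulw _ _).
have -> : stepw x a = rcons x a.
  rewrite /stepw; case: x H => [|h t] //= H.
  move: H; rewrite /reduced /= cat_path /= => /and3P[_ /negbTE -> _].
  by [].
by rewrite IH cat_rcons.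
Qed.

Lemma mulw_nil w : reduced w -> mulw [::] w = w.
Proof. by move=> H; rewrite mulw_cat. Qed.

Lemma rev_reduced g : reduced g -> reduced (rev g).
Proof.
rewrite /reduced rev_sorted; case: g => [|a g] //=.
by rewrite (@eq_path _ _ (fun a b : 'I_d => a != b)) // => x y; rewrite eq_sym.
Qed.
End S.

Section T.
Variable d : nat.
Local Notation V := (tree_vertex d).
Implicit Types (u v w g : V) (a : 'I_d).

Definition phiV g w : V := exist (fun s => reduced s) (mulw (val g) (val w)) (mulw_reduced (val w) (valP g)).
Definition invV g : V := exist (fun s => reduced s) (rev (val g)) (rev_reduced (valP g)).
Definition stepV w a : V := exist (fun s => reduced s) (stepw (val w) a) (stepw_reduced a (valP w)).

Lemma phiVK g : cancel (phiV g) (phiV (invV g)).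
Proof.
move=> w; apply: val_inj => /=.
rewrite mulw_comp ?mulw_rev ?mulw_nil //; try exact: valP. apply: rev_reduced; exact: valP.
Qed.

Lemma phiVK' g : cancel (phiV (invV g)) (phiV g).
Proof.
move=> w; apply: val_inj => /=.
rewrite mulw_comp; last exact: valP.
have Hr : reduced (rev (sval g)) by apply: rev_reduced; exact: valP.
have := mulw_rev Hr; rewrite revK => ->.
apply: mulw_nil; exact: valP.
Qed.

Definition relS (S : pred 'I_d) u v := [exists a, S a && (val v == stepw (val u) a)].

Lemma relS_phi S g u v : relS S u v -> relS S (phiV g u) (phiV g v).
Proof.
case/existsP => a /andP[Sa /eqP E]; apply/existsP; exists a.
by rewrite Sa /= E mulw_step //; exact: valP.
Qed.

Lemma relS_phiE S g u v : relS S (phiV g u) (phiV g v) = relS S u v.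
Proof.
apply/idP/idP; last exact: relS_phi.
by move/(relS_phi (invV g)); rewrite !phiVK.
Qed.

Lemma step_sym u v a : (val v == stepw (val u) a) = (val u == stepw (val v) a).
Proof.
apply/eqP/eqP => E.
  by rewrite E stepwK //; exact: valP.
by rewrite E stepwK //; exact: valP.
Qed.

Lemma relS_sym S u v : relS S u v = relS S v u.
Proof. by apply: eq_existsb => a; rewrite step_sym. Qed.

Lemma adj_phiE g u v : tree_adj (phiV g u) (phiV g v) = tree_adj u v.
Proof.
have E : forall u v, tree_adj u v = relS predT u v.
  by move=> ? ?; apply: eq_existsb.
by rewrite !E relS_phiE.
Qed.

Lemma phiV_aut g : graph_aut (@tree_adj d) (phiV g).
Proof.
split; last exact: adj_phiE.
by exists (phiV (invV g)); [exact: phiVK | exact: phiVK'].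
Qed.

Lemma invVK : involutive invV.
Proof. by move=> g; apply: val_inj; rewrite /= revK. Qed.

Lemma phiV_root g : phiV (invV g) (tree_root d) = invV g.
Proof. by apply: val_inj. Qed.

Lemma phiV_self g : phiV (invV g) g = tree_root d.
Proof. by apply: val_inj; rewrite /= mulw_rev //; exact: valP. Qed.

End T.

Section Main.
Variable d : nat.
Hypothesis hd : (2 <= d)%N.
Local Notation V := (tree_vertex d).

Definition S2 : pred 'I_d := fun a => (val a < 2)%N.
Definition L0 : V -> V -> bool := relS S2.

Definition a0 : 'I_d := Ordinal (leq_trans (isT : (1 <= 2)%N) hd).
Definition a1 : 'I_d := Ordinal hd.

Lemma L0_deg2 v : vdeg2 L0 v.
Proof.
exists (stepV v a0), (stepV v a1); split.
+ move/(congr1 val) => /= /stepw_inj /(congr1 val) /=; by [].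
+ by rewrite /L0 relS_sym; apply/existsP; exists a0; rewrite /= eqxx.
+ by rewrite /L0 relS_sym; apply/existsP; exists a1; rewrite /= eqxx.
+ move=> u; rewrite /L0 relS_sym => /existsP[a /andP[Sa /eqP E]].
  have Eu : u = stepV v a by apply: val_inj.
  clear E; move: Sa; rewrite /S2; case: a Eu => -[|[|m]] Hm // Eu _.
  * by left; rewrite Eu; congr stepV; apply: val_inj.
  * by right; rewrite Eu; congr stepV; apply: val_inj.
Qed.

Lemma L0_line : line_ensemble (@tree_adj d) L0.
Proof.
split.
- by move=> u v; rewrite /L0 relS_sym.
- move=> u; apply/existsP => -[a /andP[_ /eqP E]].
  by apply: (@stepw_neq d (val u) a); rewrite -E.
- by move=> u v /existsP[a /andP[_ E]]; apply/existsP; exists a.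
- by move=> v; right; exact: L0_deg2.
Qed.

Lemma L0_phi g : (fun x y => L0 (phiV g x) (phiV g y)) = L0.
Proof. by apply/funext => x; apply/funext => y; rewrite /L0 relS_phiE. Qed.

End Main.

Local Open Scope classical_set_scope.
Local Open Scope ring_scope.

Theorem lemma5p1 (R : realType) (d : nat) (hd : (2 <= d)%N) :
  exists (dT : measure_display) (T : measurableType dT)
         (P : probability T R) (L : T -> tree_vertex d -> tree_vertex d -> bool),
    invariant_line_ensemble (@tree_adj d) (tree_root d) P L /\
    P [set w | in_line (L w) (tree_root d)] = 1%E.
Proof.
exists _, R, (@dirac _ R 0 R), (fun _ => (@L0 d)); split.
- split.
  + by move=> _; exact: L0_line.
  + move=> x y; case: ((@L0 d) x y).
    * rewrite (_ : [set _ | _] = setT) //; by apply/seteqP; split.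
    * rewrite (_ : [set _ | _] = set0) //; by apply/seteqP; split.
  + move=> f [f0 fmeas finv]; apply: eq_integral => w _.
    transitivity (\esum_(v in [set: tree_vertex d]) f ((@L0 d)) (invV v) (tree_root d)).
      apply: eq_esum => v _.
      have := finv _ (phiV_aut (invV v)) ((@L0 d)) (tree_root d) v.
      by rewrite L0_phi phiV_root phiV_self.
    rewrite -(reindex_esum [set: tree_vertex d] [set: tree_vertex d] (@invV d)
                (fun j => f ((@L0 d)) j (tree_root d))) //.
    by rewrite setTT_bijective; exists (@invV d); exact: invVK.
- rewrite (_ : [set _ | _] = setT) ?probability_setT //.
  by apply/seteqP; split => // w _; exact: L0_deg2.
Qed.
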